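(* Let $L$ be a cosimplicial group. The map sending a morphism of cosimplicial groups $h\colon F\to L$ to $h^1(a_1)\in L_1$ is a bijection from the set of cosimplicial morphisms $F\to L$ onto $Z^1(L)$. The morphism $h_b$ corresponding to $b\in Z^1(L)$ is given by $h_b^n(a_j)=(d^0)^{j-1}(d^2)^{n-j}(b)$ for $1\le j\le n$.
   Context: $F$ is the cosimplicial group with $F_n$ the free group on $a_1,\dots,a_n$ ($F_0$ trivial), cofaces $d^i\colon F_{n-1}\to F_n$: $d^0(a_j)=a_{j+1}$; for $1\le i\le n-1$, $d^i(a_j)=a_j$ ($j<i$), $d^i(a_i)=a_ia_{i+1}$, $d^i(a_j)=a_{j+1}$ ($j>i$); $d^n(a_j)=a_j$; codegeneracies $s^i\colon F_{n+1}\to F_n$: $s^i(a_j)=a_j$ ($j\le i$), $s^i(a_{i+1})=e$, $s^i(a_j)=a_{j-1}$ ($j>i+1$). For a cosimplicial group $L$ (functor $\Delta\to\mathbf{Grp}$, $L_n=L([n])$, cofaces $d^i$, codegeneracies $s^i$), $Z^1(L)=\{b\in L_1: d^2(b)d^0(b)=d^1(b)\}$. A morphism of cosimplicial groups $h\colon F\to L$ is a natural transformation, with components $h^n\colon F_n\to L_n$. *)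

(* Defs.v *)
From mathcomp Require Import all_boot.
Unset Implicit Arguments. Unset Strict Implicit. Unset Printing Implicit Defensive.

Record grp := Grp {
  gcar :> Type;
  gmul : gcar -> gcar -> gcar;
  gone : gcar;
  ginv : gcar -> gcar;
  gmulA : forall x y z, gmul x (gmul y z) = gmul (gmul x y) z;
  gmul1g : forall x, gmul gone x = x;
  gmulg1 : forall x, gmul x gone = x;
  gmulVg : forall x, gmul (ginv x) x = gone;
  gmulgV : forall x, gmul x (ginv x) = gone
}.

Arguments gmul {g} x y.
Arguments gone {g}.
Arguments ginv {g} x.

(*   cof n i   = d^i : L_n -> L_(n+1),      0 <= i <= n+1              *)
(*   codeg n i = s^i : L_(n+1) -> L_n,      0 <= i <= n                *)
Record cosimp_grp := CosimpGrp {
  cobj :> nat -> grp;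
  cof : forall n, nat -> cobj n -> cobj n.+1;
  codeg : forall n, nat -> cobj n.+1 -> cobj n;
  cof_mul : forall n i x y, i <= n.+1 ->
    cof n i (gmul x y) = gmul (cof n i x) (cof n i y);
  codeg_mul : forall n i x y, i <= n ->
    codeg n i (gmul x y) = gmul (codeg n i x) (codeg n i y);
  cof_cof : forall n i j x, i < j -> j <= n.+2 ->
    cof n.+1 j (cof n i x) = cof n.+1 i (cof n j.-1 x);
  codeg_codeg : forall n i j x, i <= j -> j <= n ->
    codeg n j (codeg n.+1 i x) = codeg n i (codeg n.+1 j.+1 x);
  codeg_cof_lt : forall m i j x, i < j -> j <= m.+1 ->
    codeg m.+1 j (cof m.+1 i x) = cof m i (codeg m j.-1 x);
  codeg_cof_eq : forall n j x, j <= n -> codeg n j (cof n j x) = x;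
  codeg_cof_succ : forall n j x, j <= n -> codeg n j (cof n j.+1 x) = x;
  codeg_cof_gt : forall m i j x, j.+1 < i -> i <= m.+2 ->
    codeg m.+1 j (cof m.+1 i x) = cof m i.-1 (codeg m j x)
}.

Arguments cof {c} n i x.
Arguments codeg {c} n i x.

Definition Z1 {L : cosimp_grp} (b : L 1) : Prop :=
  gmul (cof 1 2 b) (cof 1 0 b) = cof 1 1 b.

Fixpoint iter_cof (L : cosimp_grp) (i k m : nat) : L m -> L (k + m) :=
  match k return L m -> L (k + m) with
  | 0 => fun x => x
  | k'.+1 => fun x => cof (k' + m) i (iter_cof L i k' m x)
  end.

(* The free group F_n on a_1,...,a_n as reduced words.                 *)
(* A letter (k, false) is a_(k+1), (k, true) is a_(k+1)^-1.            *)
Definition letter (n : nat) := ('I_n * bool)%type.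

Definition cancels {n} (x y : letter n) : bool := (x.1 == y.1) && (x.2 != y.2).

Definition reduced {n} (w : seq (letter n)) : bool :=
  sorted (fun x y => ~~ cancels x y) w.

Definition cons_red {n} (x : letter n) (w : seq (letter n)) : seq (letter n) :=
  match w with
  | y :: w' => if cancels x y then w' else x :: w
  | [::] => [:: x]
  end.

Definition reduce {n} (w : seq (letter n)) : seq (letter n) :=
  foldr (@cons_red n) [::] w.

Lemma reduce_reduced n (w : seq (letter n)) : reduced (reduce w).
Proof.
elim: w => [|x w IH] //=.
rewrite /cons_red; move: IH; case: (reduce w) => [|y w'] //= Hs.
case: ifP => Hc; first by move: Hs; case: w' => //= z w'' /andP[].
by rewrite /= Hc Hs.
Qed.

Definition FG (n : nat) := {w : seq (letter n) | reduced w}.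

Definition FGmul {n} (u v : FG n) : FG n :=
  exist _ (reduce (sval u ++ sval v)) (reduce_reduced _ _).

Definition agen {n} (k : 'I_n) : FG n := exist _ [:: (k, false)] isT.

Lemma lt_gen (i k : nat) : i < i + (k + 1).
Proof. by rewrite addn1 addnS ltnS leq_addr. Qed.

Definition inv_word {n} (w : seq (letter n)) : seq (letter n) :=
  rev (map (fun x => (x.1, ~~ x.2)) w).

Definition Fext {n m} (f : 'I_n -> seq (letter m)) (u : FG n) : FG m :=
  exist _ (reduce (flatten (map (fun x : letter n =>
                     if x.2 then inv_word (f x.1) else f x.1) (sval u))))
        (reduce_reduced _ _).

(* the one-letter word a_(t+1) in F_n (empty if t >= n, never used so) *)
Definition ow n (t : nat) : seq (letter n) :=
  if @insub _ (fun j => j < n) 'I_n t is Some o then [:: (o, false)] else [::].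

(* coface d^i : F_n -> F_(n+1) on the generator a_(k+1):
   d^i(a_j) = a_j (j < i), a_i a_(i+1) (j = i), a_(j+1) (j > i) *)
Definition Fcof_img n (i : nat) (k : 'I_n) : seq (letter n.+1) :=
  if k.+1 < i then ow n.+1 k
  else if k.+1 == i then ow n.+1 k ++ ow n.+1 k.+1
  else ow n.+1 k.+1.

Definition Fcof n (i : nat) : FG n -> FG n.+1 := Fext (Fcof_img n i).

(* codegeneracy s^i : F_(n+1) -> F_n on the generator a_(k+1):
   s^i(a_j) = a_j (j <= i), e (j = i+1), a_(j-1) (j > i+1) *)
Definition Fcodeg_img n (i : nat) (k : 'I_n.+1) : seq (letter n) :=
  if k < i then ow n k
  else if k == i :> nat then [::]
  else ow n k.-1.

Definition Fcodeg n (i : nat) : FG n.+1 -> FG n := Fext (Fcodeg_img n i).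

Record cmor (L : cosimp_grp) := CMor {
  hmap :> forall n, FG n -> L n;
  hmap_mul : forall n u v, hmap n (FGmul u v) = gmul (hmap n u) (hmap n v);
  hmap_cof : forall n i u, i <= n.+1 ->
    hmap n.+1 (Fcof n i u) = cof n i (hmap n u);
  hmap_codeg : forall n i u, i <= n ->
    hmap n (Fcodeg n i u) = codeg n i (hmap n.+1 u)
}.

Arguments hmap {L} c n u.

Definition a1 : FG 1 := agen ord0.

(* Main.v *)
Require Import Defs.
From mathcomp Require Import all_boot zify.

Lemma gcancel_l (g : grp) (x y z : g) : gmul x y = gmul x z -> y = z.
Proof.
move=> H; rewrite -(gmul1g _ y) -(gmul1g _ z) -(gmulVg _ x) -!gmulA.
by rewrite H.
Qed.

Lemma gidem (g : grp) (x : g) : gmul x x = x -> x = gone.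
Proof. by move=> H; apply: (gcancel_l g x); rewrite H gmulg1. Qed.

Lemma ginv_uniq (g : grp) (x y : g) : gmul x y = gone -> y = ginv x.
Proof. by move=> H; apply: (gcancel_l g x); rewrite H gmulgV. Qed.

Lemma ginvK (g : grp) (x : g) : ginv (ginv x) = x.
Proof. by symmetry; apply: ginv_uniq; rewrite gmulVg. Qed.

Lemma ginv1 (g : grp) : ginv (@gone g) = gone.
Proof. by symmetry; apply: ginv_uniq; rewrite gmul1g. Qed.

Lemma ginvM (g : grp) (x y : g) : ginv (gmul x y) = gmul (ginv y) (ginv x).
Proof.
symmetry; apply: ginv_uniq.
by rewrite -gmulA (gmulA _ y) gmulgV gmul1g gmulgV.
Qed.

Lemma hom_one (g h : grp) (f : g -> h) :
  (forall x y, f (gmul x y) = gmul (f x) (f y)) -> f gone = gone.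
Proof. by move=> Hm; apply: gidem; rewrite -Hm gmul1g. Qed.

Lemma hom_inv (g h : grp) (f : g -> h) :
  (forall x y, f (gmul x y) = gmul (f x) (f y)) -> forall x, f (ginv x) = ginv (f x).
Proof.
move=> Hm x; apply: ginv_uniq; rewrite -Hm gmulgV; exact: hom_one.
Qed.

Fixpoint G {L : cosimp_grp} (b : L 1) (n k : nat) {struct n} : L n :=
  match n return L n with
  | 0 => gone
  | n'.+1 => match k with
     | 0 => match n' return L n' -> L n'.+1 with
            | 0 => fun _ => b
            | n''.+1 => fun x => cof n''.+1 2 x
            end (G b n' 0)
     | k'.+1 => cof n' 0 (G b n' k')
     end
  end.

Lemma G_S0 {L : cosimp_grp} (b : L 1) n : 0 < n -> G b n.+1 0 = cof n 2 (G b n 0).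
Proof. by case: n. Qed.

Lemma cof1 {L : cosimp_grp} n i : i <= n.+1 -> cof n i (@gone (L n)) = gone.
Proof. move=> Hi; apply: hom_one => x y; exact: cof_mul. Qed.

Lemma codeg1 {L : cosimp_grp} n i : i <= n -> codeg n i (@gone (L n.+1)) = gone.
Proof. move=> Hi; apply: hom_one => x y; exact: codeg_mul. Qed.

Lemma G0 {L : cosimp_grp} (b : L 1) n i : 0 < n -> 2 <= i <= n.+1 ->
  cof n i (G b n 0) = G b n.+1 0.
Proof.
elim: n i => [//|n IH] i _ Hi.
have [->|Hne] := eqVneq i 2; first by [].
have Hn : 0 < n by move: Hi Hne; case: n {IH} => //; lia.
rewrite G_S0 // (cof_cof _ n 2 i); [|lia|lia].
by rewrite IH //; lia.
Qed.

Lemma GA {L : cosimp_grp} (b : L 1) k n i : k < n -> k.+1 < i -> i <= n.+1 ->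
  cof n i (G b n k) = G b n.+1 k.
Proof.
elim: k n i => [|k IH] n i Hk H1 H2.
  by apply: G0 => //; lia.
case: n Hk H2 => [//|n] Hk H2.
rewrite /= (cof_cof _ n 0 i); [|lia|lia].
by rewrite IH //; lia.
Qed.

Lemma GC {L : cosimp_grp} (b : L 1) k n i : i <= k -> k < n ->
  cof n i (G b n k) = G b n.+1 k.+1.
Proof.
elim: k n i => [|k IH] n i Hk H1.
  by move: Hk; rewrite leqn0 => /eqP ->.
case: i Hk => [//|i] Hk.
case: n H1 => [//|n] H1.
rewrite /= (cof_cof _ n 0 i.+1); [|lia|lia].
by rewrite /= IH //; lia.
Qed.

Lemma GB0 {L : cosimp_grp} (b : L 1) (Hb : Z1 b) n : 0 < n ->
  gmul (cof n 2 (G b n 0)) (cof n 0 (G b n 0)) = cof n 1 (G b n 0).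
Proof.
elim: n => [//|n IH] _.
case: n IH => [|n] IH; first exact: Hb.
rewrite G_S0 //.
rewrite -(cof_cof _ n.+1 2 3) // -(cof_cof _ n.+1 0 3) // -(cof_cof _ n.+1 1 3) //.
by rewrite -cof_mul // IH.
Qed.

Lemma GB {L : cosimp_grp} (b : L 1) (Hb : Z1 b) k n : k < n ->
  gmul (G b n.+1 k) (G b n.+1 k.+1) = cof n k.+1 (G b n k).
Proof.
elim: k n => [|k IH] n Hk.
  by rewrite G_S0 // GB0.
case: n Hk => [//|n] Hk.
rewrite /= -cof_mul // IH // (cof_cof _ n 0 k.+2) //; lia.
Qed.

Lemma GD0 {L : cosimp_grp} (b : L 1) n i : 0 < i -> i <= n ->
  codeg n i (G b n.+1 0) = G b n 0.
Proof.
elim: n i => [|n IH] i H0 Hi; first by lia.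
rewrite G_S0 //.
have [Hi1|Hne1] := eqVneq i 1; first by subst i; rewrite codeg_cof_succ.
have [Hi2|Hne2] := eqVneq i 2; first by subst i; rewrite codeg_cof_eq.
case: n IH Hi => [|n] IH Hi; first by lia.
rewrite codeg_cof_lt; [|lia|lia].
by rewrite IH //; lia.
Qed.

Lemma GD {L : cosimp_grp} (b : L 1) k n i : k < i -> i <= n ->
  codeg n i (G b n.+1 k) = G b n k.
Proof.
elim: k n i => [|k IH] n i Hk Hi; first exact: GD0.
case: n Hi => [|n] Hi; first by lia.
rewrite /= codeg_cof_lt; [|lia|lia].
by rewrite IH //; lia.
Qed.

Lemma codeg00 {L : cosimp_grp} (b : L 1) (Hb : Z1 b) : codeg 0 0 b = gone.
Proof.
have H := f_equal (codeg 1 0) Hb.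
rewrite codeg_mul // codeg_cof_gt // codeg_cof_eq // codeg_cof_succ // in H.
have H2 : cof 0 1 (codeg 0 0 b) = gone.
  by rewrite -(gmulg1 _ (cof 0 1 _)) -(gmulgV _ b) gmulA H gmulgV.
by rewrite -(codeg_cof_succ L 0 0 (codeg 0 0 b)) // H2 codeg1.
Qed.

Lemma GE {L : cosimp_grp} (b : L 1) (Hb : Z1 b) i n : i <= n ->
  codeg n i (G b n.+1 i) = gone.
Proof.
elim: i n => [|i IH] n Hi.
  elim: n {Hi} => [|n IHn]; first exact: codeg00.
  by rewrite G_S0 // codeg_cof_gt // IHn cof1.
case: n Hi => [//|n] Hi.
by rewrite /= codeg_cof_lt // IH // cof1.
Qed.

Lemma GF {L : cosimp_grp} (b : L 1) k n i : i < k -> k <= n ->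
  codeg n i (G b n.+1 k) = G b n k.-1.
Proof.
elim: k n i => [//|k IH] n i Hk Hn.
case: i Hk => [|i] Hk; first by rewrite /= codeg_cof_eq.
case: n Hn => [//|n] Hn.
change (G b n.+2 k.+1) with (cof n.+1 0 (G b n.+1 k)); rewrite codeg_cof_lt //; last by lia.
case: k IH Hk Hn => [|k] IH Hk Hn; first by lia.
change (cof n 0 (codeg n i (G b n.+1 k.+1)) = cof n 0 (G b n k)).
congr (cof n 0 _); apply: IH; lia.
Qed.

Lemma G_iter2 {L : cosimp_grp} (b : L 1) k : G b (k + 1) 0 = iter_cof L 2 k 1 b.
Proof.
elim: k => [//|k IH].
change (G b (k+1).+1 0 = cof (k+1) 2 (iter_cof L 2 k 1 b)).
by rewrite G_S0 ?IH // addn1.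
Qed.

Lemma G_formula {L : cosimp_grp} (b : L 1) i k :
  G b (i + (k+1)) i = iter_cof L 0 i (k+1) (iter_cof L 2 k 1 b).
Proof.
elim: i => [|i IH].
  change (G b (k+1) 0 = iter_cof L 2 k 1 b); exact: G_iter2.
change (cof (i+(k+1)) 0 (G b (i+(k+1)) i) =
        cof (i+(k+1)) 0 (iter_cof L 0 i (k+1) (iter_cof L 2 k 1 b))).
by rewrite IH.
Qed.

Definition lett {L : cosimp_grp} (b : L 1) n (x : letter n) : L n :=
  if x.2 then ginv (G b n x.1) else G b n x.1.

Definition evalw {L : cosimp_grp} (b : L 1) n (w : seq (letter n)) : L n :=
  foldr (fun x acc => gmul (lett b n x) acc) gone w.

Lemma evalw_cat {L : cosimp_grp} (b : L 1) n (w1 w2 : seq (letter n)) :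
  evalw b n (w1 ++ w2) = gmul (evalw b n w1) (evalw b n w2).
Proof.
elim: w1 => [|x w IH] /=; first by rewrite gmul1g.
by rewrite IH gmulA.
Qed.

Lemma reduce_cons n (x : letter n) w : reduce (x :: w) = cons_red x (reduce w).
Proof. by []. Qed.

Lemma evalw_cons_red {L : cosimp_grp} (b : L 1) n (x : letter n) w :
  evalw b n (cons_red x w) = gmul (lett b n x) (evalw b n w).
Proof.
case: w => [|y w] //=.
case: ifP => // /andP[/eqP E1 E2].
rewrite gmulA; suff -> : gmul (lett b n x) (lett b n y) = gone by rewrite gmul1g.
case: x y E1 E2 => k s [k' s'] /= <-; rewrite /lett /=.
by case: s; case: s' => //= _; rewrite ?gmulgV ?gmulVg.
Qed.

Lemma evalw_reduce {L : cosimp_grp} (b : L 1) n (w : seq (letter n)) :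
  evalw b n (reduce w) = evalw b n w.
Proof.
elim: w => [//|x w IH].
by rewrite reduce_cons evalw_cons_red IH.
Qed.

Lemma evalw_inv {L : cosimp_grp} (b : L 1) n (w : seq (letter n)) :
  evalw b n (inv_word w) = ginv (evalw b n w).
Proof.
elim: w => [|x w IH]; first by rewrite /= ginv1.
rewrite /inv_word map_cons rev_cons -cats1 evalw_cat -/(inv_word w) IH /=.
rewrite gmulg1 ginvM; congr gmul.
by rewrite /lett /=; case: x.2 => //=; rewrite ginvK.
Qed.

Lemma evalw_Fext {L : cosimp_grp} (b : L 1) n m (f : 'I_n -> seq (letter m))
  (phi : L n -> L m)
  (Hm : forall x y, phi (gmul x y) = gmul (phi x) (phi y))
  (Hf : forall k, evalw b m (f k) = phi (G b n k)) (u : FG n) :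
  evalw b m (sval (Fext f u)) = phi (evalw b n (sval u)).
Proof.
rewrite /Fext /= evalw_reduce; case: u => w _ /=.
elim: w => [|x w IH] /=; first by rewrite (hom_one _ _ _ Hm).
rewrite evalw_cat IH Hm; congr gmul.
case: x => k [] /=; rewrite /lett /=; last exact: Hf.
by rewrite evalw_inv Hf (hom_inv _ _ _ Hm).
Qed.

Lemma ow_lt m t (H : t < m) : ow m t = [:: (Ordinal H, false)].
Proof. by rewrite /ow insubT. Qed.

Lemma evalw_ow {L : cosimp_grp} (b : L 1) m t : t < m -> evalw b m (ow m t) = G b m t.
Proof. by move=> H; rewrite (ow_lt _ _ H) /= /lett /= gmulg1. Qed.

Lemma cof_img {L : cosimp_grp} (b : L 1) (Hb : Z1 b) n i (k : 'I_n) : i <= n.+1 ->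
  evalw b n.+1 (Fcof_img n i k) = cof n i (G b n k).
Proof.
case: k => k Hk Hi; rewrite /Fcof_img /=.
case: ifP => H1.
  by rewrite evalw_ow ?GA //; lia.
case: ifP => H2.
  move/eqP: H2 => H2; subst i.
  by rewrite evalw_cat !evalw_ow ?GB //; lia.
by rewrite evalw_ow ?GC //; lia.
Qed.

Lemma codeg_img {L : cosimp_grp} (b : L 1) (Hb : Z1 b) n i (k : 'I_n.+1) : i <= n ->
  evalw b n (Fcodeg_img n i k) = codeg n i (G b n.+1 k).
Proof.
case: k => k Hk Hi; rewrite /Fcodeg_img /=.
case: ifP => H1.
  by rewrite evalw_ow ?GD //; lia.
case: ifP => H2.
  move/eqP: H2 => H2; subst i.
  by rewrite GE.
by rewrite evalw_ow ?GF //; lia.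
Qed.

Definition hb {L : cosimp_grp} (b : L 1) (Hb : Z1 b) : cmor L.
Proof.
refine (CMor L (fun n u => evalw b n (sval u)) _ _ _).
- move=> n u v; by rewrite /FGmul /= evalw_reduce evalw_cat.
- move=> n i u Hi; apply: evalw_Fext.
  + by move=> x y; rewrite cof_mul.
  + by move=> k; rewrite cof_img.
- move=> n i u Hi; apply: evalw_Fext.
  + by move=> x y; rewrite codeg_mul.
  + by move=> k; rewrite codeg_img.
Defined.

Definition e0 n : FG n := exist _ [::] isT.

Lemma h_one {L : cosimp_grp} (h : cmor L) n : h n (e0 n) = gone.
Proof.
apply: gidem; rewrite -hmap_mul; congr (h n _); exact: val_inj.
Qed.

Lemma agen_S0 n (H : 0 < n.+2) (H' : 0 < n.+1) :
  agen (Ordinal H) = Fcof n.+1 2 (agen (Ordinal H')).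
Proof.
apply: val_inj; rewrite /= /Fcof_img /=.
by rewrite (ow_lt _ _ H).
Qed.

Lemma agen_SS n k (H : k.+1 < n.+1) (H' : k < n) :
  agen (Ordinal H) = Fcof n 0 (agen (Ordinal H')).
Proof.
apply: val_inj; rewrite /= /Fcof_img /=.
by rewrite (ow_lt _ _ H).
Qed.

Lemma h_gen {L : cosimp_grp} (h : cmor L) n k (Hk : k < n) :
  h n (agen (Ordinal Hk)) = G (h 1 a1) n k.
Proof.
elim: n k Hk => [//|n IH] [|k] Hk.
- case: n IH Hk => [|n] IH Hk.
    by change (h 1 (agen (Ordinal Hk)) = h 1 a1); rewrite /a1; congr (h 1 (agen _)); apply: val_inj.
  have H' : 0 < n.+1 by [].
  rewrite (agen_S0 n Hk H') hmap_cof // IH.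
  by [].
- have H' : k < n by [].
  rewrite (agen_SS n k Hk H') hmap_cof // IH.
  by [].
Qed.

Lemma reduce_id n (w : seq (letter n)) : reduced w -> reduce w = w.
Proof.
elim: w => [//|x w IH] Hw.
rewrite reduce_cons IH; last exact: (path_sorted Hw).
case: w {IH} Hw => [//|y w] /= /andP[Hxy _].
by rewrite (negbTE Hxy).
Qed.

Lemma h_word {L : cosimp_grp} (h : cmor L) n (u : FG n) :
  h n u = evalw (h 1 a1) n (sval u).
Proof.
case: u => w Hw /=.
elim: w Hw => [|x w IH] Hw.
  by transitivity (h n (e0 n)); [congr (h n _); exact: val_inj | exact: h_one].
have Hw' : reduced w := path_sorted Hw.
have -> : exist _ (x :: w) Hw = FGmul (exist _ [:: x] isT) (exist _ w Hw').
  apply: val_inj; rewrite /= reduce_id //.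
  case: w {IH Hw'} Hw => [//|y w] /= /andP[Hxy _].
  by rewrite /cons_red (negbTE Hxy).
rewrite hmap_mul IH /=; congr gmul.
case: x {Hw} => [[k Hk] s]; rewrite /lett /=.
have Hg : h n (exist _ [:: (Ordinal Hk, false)] isT) = G (h 1 a1) n k.
  by rewrite -(h_gen h n k Hk).
case: s => //.
rewrite -Hg; apply: ginv_uniq; rewrite -hmap_mul -(h_one h n).
congr (h n _); apply: val_inj; rewrite /= /cons_red /cancels /=.
by rewrite eqxx.
Qed.

Theorem lemma3p2 (L : cosimp_grp) :
  (* h |-> h^1(a_1) lands in Z^1(L) *)
  (forall h : cmor L, Z1 (h 1 a1)) /\
  (* it is injective *)
  (forall h h' : cmor L, h 1 a1 = h' 1 a1 -> forall n (u : FG n), h n u = h' n u) /\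
  (* it is onto Z^1(L), and h_b^n(a_j) = (d^0)^(j-1) (d^2)^(n-j) (b),
     written with j = i+1 and n = i + (k+1) *)
  (forall b : L 1, Z1 b ->
     exists h : cmor L, h 1 a1 = b /\
       forall i k : nat,
         h (i + (k + 1)) (agen (Ordinal (lt_gen i k)))
         = iter_cof L 0 i (k + 1) (iter_cof L 2 k 1 b)).
Proof.
split; [|split].
- move=> h; rewrite /Z1 -!hmap_cof // -hmap_mul; congr (h 2 _).
  by apply: val_inj; rewrite /= /Fcof_img /= (ow_lt 2 0 isT) (ow_lt 2 1 isT).
- by move=> h h' E n u; rewrite (h_word h n u) (h_word h' n u) E.
- move=> b Hb; exists (hb b Hb).
  have E : (hb b Hb) 1 a1 = b by rewrite /= /lett /= gmulg1.
  split => // i k.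
  by rewrite h_gen E G_formula.
Qed.
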